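(* Every bipartite graph is strongly EFX-orientable.
   Context: All graphs are finite and simple. For a graph $G=(V,E)$ and $v\in V$, $E(v)$ is the set of edges incident to $v$. A graphical instance on $G$ assigns to each vertex $v$ a valuation $f_v:2^E\to\mathbb{R}_{\ge 0}$ that is monotone ($A\subseteq B\Rightarrow f_v(A)\le f_v(B)$) and satisfies $f_v(X)=f_v(X\cap E(v))$ for all $X\subseteq E$. An orientation of $G$ chooses for each edge one of its endpoints as its head; vertex $v$ receives the bundle $X_v$ of edges whose head is $v$. The orientation is EFX if for all $u,v\in V$ and every $g\in X_v$, $f_u(X_u)\ge f_u(X_v\setminus\{g\})$. A graph $G$ is strongly EFX-orientable if for every graphical instance on $G$ there exists an EFX orientation. *)

(* Defs.v *)
From mathcomp Require Import all_boot all_order all_algebra.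
From mathcomp Require Import reals.
Set Implicit Arguments. Unset Strict Implicit. Unset Printing Implicit Defensive.
Import Order.TTheory GRing.Theory Num.Theory.
Local Open Scope ring_scope.

Definition simple_graph (V : finType) (adj : rel V) : Prop :=
  symmetric adj /\ irreflexive adj.

Definition is_edge (V : finType) (adj : rel V) (s : {set V}) : bool :=
  [exists u, exists v, adj u v && (s == [set u; v])].

Definition edge (V : finType) (adj : rel V) : finType :=
  {s : {set V} | is_edge adj s}.

Definition inc_edges (V : finType) (adj : rel V) (v : V) : {set edge adj} :=
  [set g : edge adj | v \in val g].

Definition graphical_instance (R : realType) (V : finType) (adj : rel V)
  (f : V -> {set edge adj} -> R) : Prop :=
  (forall v X, 0 <= f v X) /\
  (forall v (A B : {set edge adj}), A \subset B -> f v A <= f v B) /\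
  (forall v X, f v X = f v (X :&: inc_edges adj v)).

Definition orientation (V : finType) (adj : rel V) (h : edge adj -> V) : Prop :=
  forall g : edge adj, h g \in val g.

Definition bundle (V : finType) (adj : rel V) (h : edge adj -> V) (v : V)
  : {set edge adj} := [set g | h g == v].

Definition EFX (R : realType) (V : finType) (adj : rel V)
  (f : V -> {set edge adj} -> R) (h : edge adj -> V) : Prop :=
  forall u v : V, forall g, g \in bundle h v ->
    f u (bundle h v :\ g) <= f u (bundle h u).

Definition strongly_EFX_orientable (V : finType) (adj : rel V) : Prop :=
  forall (R : realType) (f : V -> {set edge adj} -> R),
    graphical_instance f ->
    exists h, orientation h /\ EFX f h.

Definition bipartite (V : finType) (adj : rel V) : Prop :=
  exists side : V -> bool, forall u v, adj u v -> side u != side v.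

(* Main.v *)
Require Import Defs.
From mathcomp Require Import all_boot all_order all_algebra.
From mathcomp Require Import reals.
Import Order.TTheory GRing.Theory Num.Theory.
Local Open Scope ring_scope.
Set Implicit Arguments. Unset Strict Implicit.

Lemma exmax (R : realType) (T : finType) (P : pred T) (F : T -> R) x0 :
  P x0 -> exists x, P x /\ forall y, P y -> F y <= F x.
Proof.
move=> Px0.
case: (@Order.TotalTheory.arg_maxP _ R T x0 P F Px0) => x Px Hx.
by exists x.
Qed.

Section Bip.
Variables (V : finType) (adj : rel V) (side : V -> bool).
Hypothesis symA : symmetric adj.
Hypothesis irrA : irreflexive adj.
Hypothesis sideA : forall u v, adj u v -> side u != side v.
Variables (R : realType) (f : V -> {set edge adj} -> R).
Hypothesis Hf : graphical_instance f.

Lemma edge_ends (g : edge adj) :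
  exists a b, [/\ side a, ~~ side b, adj a b & val g = [set a; b]].
Proof.
have /existsP[x /existsP[y /andP[axy /eqP E]]] := valP g.
have := sideA axy; case sx: (side x); case sy: (side y) => // _.
  by exists x, y; rewrite sy axy E.
by exists y, x; rewrite sx symA axy E setUC.
Qed.

Definition fav (u : V) : option (edge adj) :=
  [pick e : edge adj | (u \in val e) &&
     [forall e' : edge adj, (u \in val e') ==> (f u [set e'] <= f u [set e])]].

Definition dflt (g : edge adj) : V := xchoose (existsP (valP g)).

Definition hd (g : edge adj) : V :=
  odflt (dflt g) [pick x in val g |
     side x == [exists a in val g, side a && (fav a == Some g)]].

Lemma hd_spec g a b : side a -> ~~ side b -> val g = [set a; b] ->
  hd g = if fav a == Some g then a else b.
Proof.
move=> sa sb E.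
have Hex : [exists a' in val g, side a' && (fav a' == Some g)] = (fav a == Some g).
  apply/existsP/idP.
    case=> a' /and3P[]; rewrite E => /set2P[->|->] //.
    by rewrite (negbTE sb).
  by move=> H; exists a; rewrite E set21 sa H.
rewrite /hd Hex.
case: pickP => [x /andP[]|].
  rewrite E => /set2P[->|->]; rewrite ?sa ?(negbTE sb).
    by case: (fav a == Some g).
  by case: (fav a == Some g).
move=> /(_ (if fav a == Some g then a else b)).
case: (fav a == Some g); rewrite /= E ?set21 ?set22 ?sa ?(negbTE sb) //.
Qed.

Lemma fav_some u (e : edge adj) : u \in val e -> exists e' : edge adj, fav u = Some e' /\
   u \in val e' /\ forall e'' : edge adj, u \in val e'' -> f u [set e''] <= f u [set e'].
Proof.
move=> ue.
have [m [Pm Hm]] := @exmax R _ (fun e0 : edge adj => u \in val e0) (fun e'' => f u [set e'']) e ue.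
rewrite /fav; case: pickP => [e' /andP[ue' /forallP H]|].
  by exists e'; split => //; split => // e'' He''; exact: (implyP (H e'')).
move=> /(_ m); rewrite Pm /=; move/negbT/negP; case.
by apply/forallP => e''; apply/implyP; exact: Hm.
Qed.

Lemma two_ends (e : edge adj) u v : u != v -> u \in val e -> v \in val e ->
  val e = [set u; v].
Proof.
move=> nuv; have [a [b [_ _ _ E]]] := edge_ends e; rewrite E.
move: nuv => /[swap] /set2P[]-> /[swap] /set2P[]->; rewrite ?eqxx // => _.
by rewrite setUC.
Qed.

Lemma hd_in g : hd g \in val g.
Proof.
have [a [b [sa sb _ E]]] := edge_ends g.
by rewrite (hd_spec sa sb E) E; case: ifP; rewrite ?set21 ?set22.
Qed.

Lemma main_efx : orientation hd /\ EFX f hd.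
Proof.
have [f0 [fmon floc]] := Hf.
split; first exact: hd_in.
move=> u v g0; rewrite inE => /eqP hg0.
have [->|nuv] := eqVneq u v.
  by apply: fmon; apply: subD1set.
rewrite floc.
set S := (_ :&: _).
case: (set_0Vmem S) => [->|[e eS]].
  by apply: fmon; exact: sub0set.
have := eS; rewrite !inE => /andP[/andP[neg0 /eqP he] ue].
have ve : v \in val e by rewrite -he hd_in.
have Ee := two_ends nuv ue ve.
have SS : S \subset [set e].
  apply/subsetP => e2; rewrite !inE => /andP[/andP[_ /eqP he2] ue2].
  have ve2 : v \in val e2 by rewrite -he2 hd_in.
  by apply/eqP/val_inj; rewrite /= (two_ends nuv ue2 ve2) Ee.
apply: le_trans (fmon _ _ _ SS) _.
have [a [b [sa sb ab E]]] := edge_ends e.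
have Hu : u \in [set a; b] by rewrite -E Ee set21.
have Hv : v \in [set a; b] by rewrite -E Ee set22.
case/set2P: Hu => Hu; case/set2P: Hv => Hv; subst u;
  rewrite Hv in hg0 he nuv; try by rewrite eqxx in nuv.
-
  have [e' [fe' [ue' Hmax]]] := fav_some ue.
  apply: le_trans (Hmax _ ue) _.
  apply: fmon; rewrite sub1set inE.
  have [a' [b' [sa' sb' _ E']]] := edge_ends e'.
  have : a \in [set a'; b'] by rewrite -E'.
  case/set2P => Ha; last by move: sb'; rewrite -Ha sa.
  subst a'.
  by rewrite (hd_spec sa sb' E') fe' eqxx.
- (* v = a: e is a's favourite, so is g0 *)
  exfalso.
  move: he; rewrite (hd_spec sa sb E); case: ifP => Hfe; last first.
    by move=> Hba; move: sb; rewrite Hba sa.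
  move=> _.
  have ag0 : a \in val g0 by rewrite -hg0 hd_in.
  have [a' [b' [sa' sb' _ E']]] := edge_ends g0.
  have : a \in [set a'; b'] by rewrite -E'.
  case/set2P => Ha; last by move: sb'; rewrite -Ha sa.
  subst a'.
  move: hg0; rewrite (hd_spec sa sb' E'); case: ifP => Hg.
    by move: Hfe Hg => /eqP -> /eqP [] gE; rewrite gE eqxx in neg0.
  by move=> Hba; move: sb'; rewrite Hba sa.
Qed.

End Bip.

Theorem mainTheorem6 (V : finType) (adj : rel V) :
  simple_graph adj -> bipartite adj -> strongly_EFX_orientable adj.
Proof.
move=> [symA irrA] [side sideA] R f Hf.
exists (hd side f); exact: main_efx.
Qed.
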